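(* For any two undirected graphs $G,H$, with $G+H$ denoting their disjoint union, $\beta(G+H)=\beta(G)+\beta(H)$ and $\beta^*(G+H)=\beta^*(G)+\beta^*(H)$.
   Context: For an undirected graph $G$ on vertex set $[n]$, consider the index coding problem: a server holds messages $x_1,\dots,x_n\in\Sigma$ ($|\Sigma|>1$), receiver $i$ wants $x_i$ and knows $x_j$ for every neighbor $j$ of $i$. A solution is an encoding $\mathcal{E}:\Sigma^n\to\Sigma_P$ from which each receiver can recover its message given its side information, for all message values. $\beta_t(G)$ is the minimum of $\lceil\log_2|\Sigma_P|\rceil$ over solutions with $|\Sigma|=2^t$; $\beta(G)=\lim_t\beta_t(G)/t=\inf_t\beta_t(G)/t$. For a positive integer $t$, $t\cdot G$ denotes the disjoint union of $t$ copies of $G$, and $\beta^*(G)=\lim_{t\to\infty}\frac1t\beta_1(t\cdot G)=\inf_t\frac1t\beta_1(t\cdot G)$. *)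

(* Defs.v *)
From HB Require Import structures.
From mathcomp Require Import all_boot all_order all_algebra.
From mathcomp Require Import classical_sets reals.
Set Implicit Arguments. Unset Strict Implicit. Unset Printing Implicit Defensive.
Import Order.TTheory GRing.Theory Num.Theory.
Local Open Scope ring_scope.
Local Open Scope classical_set_scope.

Definition undirected (V : finType) (G : rel V) : Prop :=
  symmetric G /\ irreflexive G.

Definition gunion (V1 V2 : finType) (G : rel V1) (H : rel V2) : rel (V1 + V2)%type :=
  fun u v => match u, v with
             | inl a, inl b => G a b
             | inr a, inr b => H a b
             | _, _ => false
             end.

Definition gcopies (V : finType) (t : nat) (G : rel V) : rel ('I_t * V)%type :=
  fun u v => (u.1 == v.1) && G u.2 v.2.

(* E : Sigma^V -> P is an index coding solution for G: each receiver i has a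
   decoder that, from the public message and its side information (the
   messages at neighbours of i only), recovers x_i, for all message values. *)
Definition ic_solution (V : finType) (G : rel V) (S P : Type)
  (E : {ffun V -> S} -> P) : Prop :=
  exists D : V -> P -> {ffun V -> S} -> S,
    (forall i p (x y : {ffun V -> S}),
        (forall j, G i j -> x j = y j) -> D i p x = D i p y) /\
    (forall i (x : {ffun V -> S}), D i (E x) x = x i).

(* beta_t(G): minimum over solutions with |Sigma| = 2^t (Sigma = 'I_(2^t)) of
   ceil(log2 |Sigma_P|) = up_log 2 #|Sigma_P|. Realised as an infimum in R
   (the set is a nonempty set of naturals, so the infimum is the minimum). *)
Definition beta_t (R : realType) (V : finType) (G : rel V) (t : nat) : R :=
  inf [set x : R | exists (P : finType) (E : {ffun V -> 'I_(2 ^ t)} -> P),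
                     ic_solution G E /\ x = (up_log 2 #|P|)%:R].

Definition beta (R : realType) (V : finType) (G : rel V) : R :=
  inf [set x : R | exists t : nat, (0 < t)%N /\ x = beta_t R G t / t%:R].

Definition beta_star (R : realType) (V : finType) (G : rel V) : R :=
  inf [set x : R | exists t : nat, (0 < t)%N /\ x = beta_t R (@gcopies V t G) 1 / t%:R].

(* Main.v *)
Require Import Defs.
From HB Require Import structures.
From mathcomp Require Import all_boot all_order all_algebra.
From mathcomp Require Import classical_sets reals.
From mathcomp Require Import zify ring lra.
From Stdlib Require Import Classical.
Set Implicit Arguments. Unset Strict Implicit. Unset Printing Implicit Defensive.
Import Order.TTheory GRing.Theory Num.Theory.

Section Part1.

Definition confb (V S : finType) (G : rel V) (x y : {ffun V -> S}) : bool :=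
  [exists i, (x i != y i) && [forall j, G i j ==> (x j == y j)]].

Definition valid (V S P : finType) (G : rel V) (E : {ffun V -> S} -> P) :=
  forall x y, confb G x y -> E x != E y.

Lemma confbxx (V S : finType) (G : rel V) x : confb (S:=S) G x x = false.
Proof. by apply/existsP=> -[i]; rewrite eqxx. Qed.

Lemma sol_valid (V S P : finType) (G : rel V) (E : {ffun V -> S} -> P) :
  ic_solution G E -> valid G E.
Proof.
move=> [D [HD HE]] x y /existsP[i /andP[xy /forallP Hn]].
apply/eqP=> Exy; move/eqP: xy; apply.
rewrite -(HE i x) -(HE i y) Exy; apply: HD => j Gij.
by move/implyP: (Hn j) => /(_ Gij)/eqP.
Qed.

Lemma valid_sol (V S P : finType) (G : rel V) (E : {ffun V -> S} -> P) :
  valid G E -> ic_solution G E.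
Proof.
move=> HV.
pose D := fun i (p : P) (x : {ffun V -> S}) =>
  if [pick z | (E z == p) && [forall j, G i j ==> (z j == x j)]] is Some z
  then z i else if [pick s : S] is Some s then s else x i.
exists D; split.
- move=> i p x y Hxy; rewrite /D.
  rewrite (@eq_pick _ _ (fun z => (E z == p) && [forall j, G i j ==> (z j == y j)])); last first.
    move=> z /=; congr (_ && _); apply: eq_forallb => j.
    by case Gij: (G i j) => //=; rewrite (Hxy j Gij).
  case: pickP => // _; case: pickP => [//|H]; by have := H (x i).
- move=> i x; rewrite /D; case: pickP => [z /andP[/eqP Ez /forallP Hz]|H].
    apply/eqP; apply/negP => /negP zx.
    have: confb G z x by apply/existsP; exists i; rewrite zx; apply/forallP.
    by move/HV; rewrite Ez eqxx.
  by have := H x; rewrite eqxx /=; move/negbT/negP; case; apply/forallP=> j; apply/implyP.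
Qed.

Lemma valid_comp (V V' S S' P : finType) (G : rel V) (G' : rel V')
  (E : {ffun V -> S} -> P) (F : {ffun V' -> S'} -> {ffun V -> S}) :
  (forall x y, confb G' x y -> confb G (F x) (F y)) ->
  valid G E -> valid G' (fun x => E (F x)).
Proof. by move=> HF HE x y /HF /HE. Qed.

Lemma conf_inj (V S S' : finType) (G : rel V) (psi : S' -> S) :
  injective psi -> forall x y : {ffun V -> S'},
  confb G x y -> confb G [ffun v => psi (x v)] [ffun v => psi (y v)].
Proof.
move=> Hi x y /existsP[i /andP[xy /forallP Hn]]; apply/existsP; exists i.
rewrite !ffunE (inj_eq Hi) xy /=; apply/forallP=> j; rewrite !ffunE.
by move/implyP: (Hn j) => H; apply/implyP=> /H /eqP ->.
Qed.

Lemma card_bij (A B : finType) : #|A| = #|B| ->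
  exists h : A -> B, injective h /\ forall b, exists a, h a = b.
Proof.
move=> e.
exists (fun a => enum_val (cast_ord e (enum_rank a))); split.
  by move=> a a' /enum_val_inj /cast_ord_inj /enum_rank_inj.
move=> b; exists (enum_val (cast_ord (esym e) (enum_rank b))).
by rewrite enum_valK cast_ordKV enum_rankK.
Qed.

Lemma valid_alpha (V S S' P : finType) (G : rel V) (E : {ffun V -> S} -> P) :
  #|S'| = #|S| -> valid G E -> exists E' : {ffun V -> S'} -> P, valid G E'.
Proof.
move=> e HE; have [h [hi _]] := card_bij e.
by eexists; apply: (valid_comp (conf_inj hi)) HE.
Qed.

Lemma valid_graph (V V' S P : finType) (G : rel V) (G' : rel V') (g : V -> V')
  (E : {ffun V -> S} -> P) :
  (forall i', exists i, g i = i') -> (forall i j, G i j -> G' (g i) (g j)) ->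
  valid G E -> exists E' : {ffun V' -> S} -> P, valid G' E'.
Proof.
move=> gs gh HE; eexists; apply: (@valid_comp _ _ _ _ _ _ _ _ (fun z => [ffun v => z (g v)])) HE.
move=> x y /existsP[i' /andP[xy /forallP Hn]].
have [i gi] := gs i'; subst i'.
apply/existsP; exists i; rewrite !ffunE xy /=; apply/forallP=> j; rewrite !ffunE.
by apply/implyP=> /gh Gij; move/implyP: (Hn (g j)) => /(_ Gij).
Qed.

Definition lft (V1 V2 S : finType) (z : {ffun (V1 + V2)%type -> S}) : {ffun V1 -> S} :=
  [ffun v => z (inl v)].
Definition rgt (V1 V2 S : finType) (z : {ffun (V1 + V2)%type -> S}) : {ffun V2 -> S} :=
  [ffun v => z (inr v)].

Lemma conf_split (V1 V2 S : finType) (G : rel V1) (H : rel V2) z z' :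
  confb (S:=S) (gunion G H) z z' -> confb G (lft z) (lft z') || confb H (rgt z) (rgt z').
Proof.
move=> /existsP[[i|i] /andP[xy /forallP Hn]].
  apply/orP; left; apply/existsP; exists i; rewrite !ffunE xy /=.
  by apply/forallP=> j; rewrite !ffunE; exact: (Hn (inl j)).
apply/orP; right; apply/existsP; exists i; rewrite !ffunE xy /=.
by apply/forallP=> j; rewrite !ffunE; exact: (Hn (inr j)).
Qed.

Lemma conf_lft (V1 V2 S : finType) (G : rel V1) (H : rel V2) z z' :
  confb G (lft z) (lft z') -> confb (S:=S) (gunion G H) z z'.
Proof.
move=> /existsP[i /andP[xy /forallP Hn]]; apply/existsP; exists (inl i).
move: xy; rewrite !ffunE => -> /=; apply/forallP=> -[j|j] //=.
by move: (Hn j); rewrite !ffunE.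
Qed.

Lemma conf_rgt (V1 V2 S : finType) (G : rel V1) (H : rel V2) z z' :
  confb H (rgt z) (rgt z') -> confb (S:=S) (gunion G H) z z'.
Proof.
move=> /existsP[i /andP[xy /forallP Hn]]; apply/existsP; exists (inr i).
move: xy; rewrite !ffunE => -> /=; apply/forallP=> -[j|j] //=.
by move: (Hn j); rewrite !ffunE.
Qed.

Lemma valid_pair (V1 V2 S P1 P2 : finType) (G : rel V1) (H : rel V2)
  (E1 : {ffun V1 -> S} -> P1) (E2 : {ffun V2 -> S} -> P2) :
  valid G E1 -> valid H E2 ->
  valid (gunion G H) (fun z => (E1 (lft z), E2 (rgt z))).
Proof.
move=> h1 h2 z z' /conf_split /orP[/h1|/h2] ne; apply/eqP=> -[e1 e2].
  by move: ne; rewrite e1 eqxx.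
by move: ne; rewrite e2 eqxx.
Qed.

Definition slice (k : nat) (V S : finType) (c : 'I_k) (z : {ffun ('I_k * V)%type -> S}) :
  {ffun V -> S} := [ffun v => z (c, v)].

Lemma valid_copies (k : nat) (V S P : finType) (G : rel V) (E : {ffun V -> S} -> P) :
  valid G E -> valid (@gcopies _ k G) (fun z => [ffun c => E (slice c z)]).
Proof.
move=> HE z z' /existsP[[c i] /andP[xy /forallP Hn]].
have: confb G (slice c z) (slice c z').
  apply/existsP; exists i; rewrite !ffunE xy /=; apply/forallP=> j; rewrite !ffunE.
  by move: (Hn (c, j)); rewrite /gcopies /= eqxx.
move/HE=> ne; apply/eqP=> /ffunP /(_ c); rewrite !ffunE; apply/eqP; exact: ne.
Qed.

Lemma valid_unflat (k : nat) (V S P : finType) (G : rel V)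
  (E : {ffun ('I_k * V)%type -> S} -> P) :
  valid (@gcopies _ k G) E -> exists E' : {ffun V -> {ffun 'I_k -> S}} -> P, valid G E'.
Proof.
move=> HE; eexists.
apply: (@valid_comp _ _ _ _ _ _ _ _ (fun x : {ffun V -> {ffun 'I_k -> S}} => [ffun cv : 'I_k * V => x cv.2 cv.1])) HE.
move=> x y /existsP[i /andP[xy /forallP Hn]].
have [c xyc]: exists c, x i c != y i c.
  apply/existsP; move: xy; apply: contraNT; rewrite negb_exists => /forallP H.
  by apply/eqP/ffunP=> c; move: (H c); rewrite negbK => /eqP.
apply/existsP; exists (c, i); rewrite !ffunE /= xyc /=.
apply/forallP=> -[c' j]; rewrite !ffunE /gcopies /=.
apply/implyP=> /andP[_ Gij]; move/implyP: (Hn j) => /(_ Gij)/eqP -> //.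
Qed.

End Part1.

Section Part2.

Lemma union_bound (T I : finType) (B : I -> {set T}) :
  #|[set f | [exists y, f \in B y]]| <= \sum_y #|B y|.
Proof.
rewrite -sum1_card.
apply: (@leq_trans (\sum_(f in [set f | [exists y, f \in B y]]) \sum_y (f \in B y : nat))).
  apply: leq_sum => f; rewrite inE => /existsP[y fy].
  by rewrite (bigD1 y) //= fy.
apply: (@leq_trans (\sum_f \sum_y (f \in B y : nat))).
  by rewrite [X in _ <= X](bigID (fun f => f \in [set f | [exists y, f \in B y]])) /= leq_addr.
have -> : \sum_f \sum_y (f \in B y : nat) = \sum_y \sum_f (f \in B y : nat).
  exact: exchange_big.
apply: leq_sum => y _.
rewrite -sum1_card [X in _ <= X]big_mkcond; apply: leq_sum => f _; by case: (f \in B y).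
Qed.

Definition tr (W : finType) (S : finZmodType) (g x : {ffun W -> S}) : {ffun W -> S} :=
  [ffun v => (x v - g v)%R].

Lemma conf_tr (W : finType) (S : finZmodType) (G : rel W) (g x y : {ffun W -> S}) :
  confb G (tr g x) (tr g y) = confb G x y.
Proof.
apply: eq_existsb => i; rewrite !ffunE (inj_eq (@addIr _ _)); congr (_ && _).
by apply: eq_forallb => j; rewrite !ffunE (inj_eq (@addIr _ _)).
Qed.

Lemma cover_exists (W : finType) (S : finZmodType) (J : {set {ffun W -> S}}) (m : nat) :
  #|{ffun W -> S}| * (#|{ffun W -> S}| - #|J|) ^ m < #|{ffun W -> S}| ^ m ->
  exists f : {ffun 'I_m -> {ffun W -> S}}, forall y, exists i, tr (f i) y \in J.
Proof.
move=> Hlt.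
pose Bs y := [set g : {ffun W -> S} | tr g y \notin J].
pose B y := [set f : {ffun 'I_m -> {ffun W -> S}} | f \in ffun_on (Bs y)].
have cBs y : #|Bs y| = #|{ffun W -> S}| - #|J|.
  have -> : Bs y = ~: [set tr x y | x in J].
    apply/setP=> g; rewrite !inE; congr negb; apply/idP/imsetP.
      move=> gJ; exists (tr g y) => //; apply/ffunP=> v; rewrite !ffunE.
      by rewrite opprB addrC subrK.
    move=> [x xJ ->]; suff -> : tr (tr x y) y = x by [].
    by apply/ffunP=> v; rewrite !ffunE opprB addrC subrK.
  rewrite -(cardsC [set tr x y | x in J]) card_imset ?addKn //.
  move=> x x' /ffunP e; apply/ffunP=> v; move: (e v); rewrite !ffunE.
  by move/addrI/oppr_inj.
have cB y : #|B y| = (#|{ffun W -> S}| - #|J|) ^ m.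
  have := @card_ffun_on 'I_m _ (Bs y); rewrite card_ord cBs => <-.
  by apply: eq_card => f; rewrite inE.
have Hbad := union_bound B.
have : #|[set f | [exists y, f \in B y]]| < #|{ffun 'I_m -> {ffun W -> S}}|.
  apply: leq_ltn_trans Hbad _; under eq_bigr do rewrite cB.
  rewrite sum_nat_const [X in _ < X]card_ffun card_ord; exact: Hlt.
rewrite -(cardsC [set f | [exists y, f \in B y]]) -{1}[#|[set f | _]|]addn0 ltn_add2l.
case/card_gt0P => f; rewrite !inE negb_exists => /forallP Hf.
exists f => y; move: (Hf y); rewrite !inE.
case: (boolP [exists i, tr (f i) y \in J]) => [/existsP //|].
rewrite negb_exists => /forallP H; case/negP; apply/ffun_onP => i; rewrite inE; exact: H i.
Qed.

End Part2.

Section Part3.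

Lemma bern_lb (a b r : nat) : b ^ r.+1 + r.+1 * a * b ^ r <= (b + a) ^ r.+1.
Proof.
elim: r => [|r IH]; first by rewrite !expn1 expn0 muln1 mul1n.
rewrite [(b + a) ^ r.+2]expnS.
apply: (@leq_trans ((b + a) * (b ^ r.+1 + r.+1 * a * b ^ r))); last by rewrite leq_mul2l IH orbT.
rewrite !expnS; nia.
Qed.

Lemma two_pow (Q a r : nat) : 0 < a <= Q -> Q <= r * a -> 2 * (Q - a) ^ r <= Q ^ r.
Proof.
move=> /andP[a0 aQ] Qr.
case: r Qr => [|r] Qr; first by move: Qr; rewrite mul0n; lia.
have := bern_lb a (Q - a) r; rewrite subnK //.
set b := Q - a => Hb.
have hb : b <= Q by rewrite /b leq_subr.
have : b * b ^ r <= r.+1 * a * b ^ r by rewrite leq_mul2r; apply/orP; right; exact: leq_trans hb Qr.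
move=> H; have e : b ^ r.+1 = b * b ^ r by rewrite expnS.
lia.
Qed.

Lemma cov_num (Q a r L : nat) : 0 < a <= Q -> Q <= r * a -> Q < 2 ^ L ->
  Q * (Q - a) ^ (r * L) < Q ^ (r * L).
Proof.
move=> Ha Qr QL.
have H2 := two_pow Ha Qr.
have HL : 2 ^ L * (Q - a) ^ (r * L) <= Q ^ (r * L).
  by rewrite !expnM -expnMn leq_exp2r // ?mulnC //; case: L QL => //; rewrite expn0; case/andP: Ha; lia.
case: (posnP ((Q - a) ^ (r * L))) => [->|pos].
  by rewrite muln0 expn_gt0; case/andP: Ha => a0 aQ; apply/orP; left; lia.
by apply: leq_trans HL; rewrite ltn_mul2r pos.
Qed.

End Part3.

Section Part4.

Definition indepb (V S : finType) (G : rel V) (A : {set {ffun V -> S}}) : bool :=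
  [forall x in A, forall y in A, ~~ confb G x y].

Definition alpha (V S : finType) (G : rel V) : nat :=
  \max_(A : {set {ffun V -> S}} | indepb G A) #|A|.

Lemma indepP (V S : finType) (G : rel V) (A : {set {ffun V -> S}}) :
  (forall x y, x \in A -> y \in A -> ~~ confb G x y) -> indepb G A.
Proof. by move=> H; apply/forallP=> x; apply/implyP=> xA; apply/forallP=> y; apply/implyP=> yA; exact: H. Qed.

Lemma indepE (V S : finType) (G : rel V) (A : {set {ffun V -> S}}) x y :
  indepb G A -> x \in A -> y \in A -> ~~ confb G x y.
Proof. by move=> /forallP/(_ x)/implyP H xA; move/(_ xA)/forallP/(_ y)/implyP: H. Qed.

Lemma indep_le (V S : finType) (G : rel V) (A : {set {ffun V -> S}}) :
  indepb G A -> #|A| <= alpha S G.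
Proof. by move=> h; apply: (@leq_bigmax_cond _ _ (fun A : {set {ffun V -> S}} => #|A|) A h). Qed.

Lemma alpha_wit (V S : finType) (G : rel V) :
  exists I : {set {ffun V -> S}}, indepb G I /\ #|I| = alpha S G.
Proof.
have : 0 < #|[pred A : {set {ffun V -> S}} | indepb G A]|.
  apply/card_gt0P; exists finset.set0; rewrite inE; apply: indepP => x y; by rewrite inE.
move/(@eq_bigmax_cond _ _ (fun A : {set {ffun V -> S}} => #|A|)) => [I HI HM].
by exists I; split => //; rewrite /alpha; move: HI; rewrite inE; move: HM => <-.
Qed.

Lemma alpha_gt0 (V S : finType) (G : rel V) (x : {ffun V -> S}) : 0 < alpha S G.
Proof.
apply: (@leq_trans #|[set x]|); first by rewrite cards1.
apply: indep_le; apply: indepP => y z; rewrite !inE => /eqP-> /eqP->; by rewrite confbxx.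
Qed.

Lemma class_bound (V1 V2 S P : finType) (G : rel V1) (H : rel V2)
  (E : {ffun (V1 + V2)%type -> S} -> P) (p : P) :
  valid (gunion G H) E -> #|[set z | E z == p]| <= alpha S G * alpha S H.
Proof.
move=> HE; set Q := [set z | E z == p].
have iQ : forall z z', z \in Q -> z' \in Q -> ~~ confb (gunion G H) z z'.
  move=> z z'; rewrite !inE => /eqP zp /eqP z'p; apply/negP => /HE.
  by rewrite zp z'p eqxx.
rewrite -sum1_card (@partition_big_imset _ _ _ _ _ (@lft V1 V2 S)) /=.
apply: (@leq_trans (\sum_(a in [set lft x | x in Q]) alpha S H)).
  apply: leq_sum => a _; rewrite sum1_card.
  rewrite -(@card_in_imset _ _ (@rgt V1 V2 S)); last first.
    move=> z z' /andP[_ /eqP za] /andP[_ /eqP z'a] e.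
    apply/ffunP=> -[v|v].
      by move/ffunP: za => /(_ v); move/ffunP: z'a => /(_ v); rewrite !ffunE => -> ->.
    by move/ffunP: e => /(_ v); rewrite !ffunE.
  apply: indep_le; apply: indepP => x y /imsetP[z zQ ->] /imsetP[z' z'Q ->].
  case/andP: zQ => zQ /eqP za; case/andP: z'Q => z'Q /eqP z'a.
  apply/negP => /(@conf_rgt _ _ _ G); apply/negP; exact: iQ.
rewrite sum_nat_const leq_mul2r; apply/orP; right.
apply: indep_le; apply: indepP => x y /imsetP[z zQ ->] /imsetP[z' z'Q ->].
apply/negP => /(@conf_lft _ _ _ _ H); apply/negP; exact: iQ.
Qed.

Lemma lower_bound (V1 V2 S P : finType) (G : rel V1) (H : rel V2)
  (E : {ffun (V1 + V2)%type -> S} -> P) :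
  valid (gunion G H) E ->
  #|{ffun V1 -> S}| * #|{ffun V2 -> S}| <= #|P| * (alpha S G * alpha S H).
Proof.
move=> HE.
have -> : #|{ffun V1 -> S}| * #|{ffun V2 -> S}| = #|{ffun (V1 + V2)%type -> S}|.
  by rewrite !card_ffun card_sum expnD.
rewrite -sum1_card (partition_big (fun z => E z) xpredT) //=.
rewrite -sum_nat_const; apply: leq_sum => p _; rewrite sum1_card.
apply: leq_trans (class_bound p HE); apply: eq_leq; apply: eq_card => z; by rewrite inE.
Qed.

End Part4.

Section Part5.

Lemma cover_code (V : finType) (S : finZmodType) (G : rel V) (k : nat) : 0 < k ->
  exists E1 : {ffun ('I_k * V)%type -> S} ->
     option 'I_((#|{ffun V -> S}| ^ k %/ alpha S G ^ k).+1 * (k * #|{ffun V -> S}|)),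
    valid (@gcopies _ k G) E1.
Proof.
move=> k0.
set c := #|{ffun V -> S}|; set a1 := alpha S G.
have [I [HI cI]] := alpha_wit S G.
pose flat (f : {ffun 'I_k -> {ffun V -> S}}) : {ffun ('I_k * V)%type -> S} :=
  [ffun cv => f cv.1 cv.2].
pose J := [set flat f | f in ffun_on I].
have cJ : #|J| = a1 ^ k.
  rewrite card_imset ?card_ffun_on ?card_ord ?cI //.
  move=> f f' e; apply/ffunP=> i; apply/ffunP=> v.
  by move/ffunP: e => /(_ (i, v)); rewrite !ffunE.
have iJ : indepb (@gcopies _ k G) J.
  apply: indepP => x y /imsetP[f /ffun_onP fI ->] /imsetP[f' /ffun_onP f'I ->].
  apply/negP => /existsP[[i v] /andP[xy /forallP Hn]].
  have : confb G (f i) (f' i).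
    apply/existsP; exists v; move: xy; rewrite !ffunE /= => -> /=.
    apply/forallP=> w; apply/implyP=> Gvw.
    by move: (Hn (i, w)); rewrite /gcopies /= eqxx Gvw !ffunE.
  by apply/negP; apply: indepE HI (fI i) (f'I i).
have cM : #|{ffun ('I_k * V)%type -> S}| = c ^ k.
  by rewrite /c !card_ffun card_prod card_ord -expnM mulnC.
have a0 : 0 < a1 by apply: (alpha_gt0 G [ffun _ => 0%R]).
set m := (c ^ k %/ a1 ^ k).+1 * (k * c).
have [f Hf] : exists f : {ffun 'I_m -> {ffun ('I_k * V)%type -> S}},
    forall y, exists i, tr (f i) y \in J.
  apply: cover_exists; rewrite cM cJ; apply: cov_num.
  - rewrite expn_gt0 a0 /= -cJ -cM; exact: max_card.
  - by apply: ltnW; apply: ltn_ceil; rewrite expn_gt0 a0.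
  - rewrite mulnC expnM ltn_exp2r //; exact: ltn_expl.
exists (fun z => [pick i | tr (f i) z \in J]).
move=> z z' Hc; case: pickP => [i zi|]; last by case: (Hf z) => j Hj /(_ j); rewrite Hj.
case: pickP => [i' z'i|]; last by case: (Hf z') => j Hj /(_ j); rewrite Hj.
apply/eqP=> -[e]; subst i'.
have := indepE iJ zi z'i; rewrite conf_tr Hc //.
Qed.

End Part5.

Section Part6.

Lemma num_core c1 c2 a1 a2 N k : 0 < k -> 0 < a1 <= c1 -> 0 < a2 <= c2 ->
  c1 * c2 <= N * (a1 * a2) ->
  ((c1 ^ k %/ a1 ^ k).+1 * (k * c1)).+1 * ((c2 ^ k %/ a2 ^ k).+1 * (k * c2)).+1
   <= N ^ k * (16 * (c1 * c2) * k ^ 2).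
Proof.
move=> k0 /andP[a10 a1c] /andP[a20 a2c] hN.
set A1 := a1 ^ k; set A2 := a2 ^ k; set C1 := c1 ^ k; set C2 := c2 ^ k.
set x1 := C1 %/ A1; set x2 := C2 %/ A2.
have A10 : 0 < A1 by rewrite expn_gt0 a10.
have A20 : 0 < A2 by rewrite expn_gt0 a20.
have hx1 : x1 * A1 <= C1 by apply: leq_trunc_div.
have hx2 : x2 * A2 <= C2 by apply: leq_trunc_div.
have x10 : 0 < x1 by rewrite divn_gt0 // leq_exp2r.
have x20 : 0 < x2 by rewrite divn_gt0 // leq_exp2r.
have hC : C1 * C2 <= N ^ k * (A1 * A2).
  by rewrite /C1 /C2 /A1 /A2 -!expnMn leq_exp2r.
have hx : x1 * x2 <= N ^ k.
  rewrite -(@leq_pmul2r (A1 * A2)) ?muln_gt0 ?A10 //.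
  apply: leq_trans hC; apply: leq_trans (leq_mul hx1 hx2); apply: eq_leq; ring.
have c10 : 0 < c1 by apply: leq_trans a1c.
have c20 : 0 < c2 by apply: leq_trans a2c.
set m1 := x1.+1 * (k * c1); set m2 := x2.+1 * (k * c2).
have m1b : m1.+1 <= 2 * m1 by rewrite /m1; nia.
have m2b : m2.+1 <= 2 * m2 by rewrite /m2; nia.
apply: leq_trans (leq_mul m1b m2b) _.
have e1 : x1.+1 <= 2 * x1 by lia.
have e2 : x2.+1 <= 2 * x2 by lia.
have := leq_mul e1 e2 => e12.
have : 2 * m1 * (2 * m2) = 4 * (x1.+1 * x2.+1) * (c1 * c2 * k ^ 2) by rewrite /m1 /m2; ring.
move=> ->.
apply: (@leq_trans (4 * (2 * x1 * (2 * x2)) * (c1 * c2 * k ^ 2))).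
  by rewrite leq_mul2r leq_mul2l e12 !orbT.
have : 4 * (2 * x1 * (2 * x2)) * (c1 * c2 * k ^ 2) = (x1 * x2) * (16 * (c1 * c2) * k ^ 2) by ring.
by move=> ->; rewrite leq_mul2r hx orbT.
Qed.

Lemma alpha_le (V S : finType) (G : rel V) : alpha S G <= #|{ffun V -> S}|.
Proof. have [I [_ <-]] := alpha_wit S G; exact: max_card. Qed.

Lemma core (V1 V2 : finType) (S : finZmodType) (G : rel V1) (H : rel V2) (P : finType)
  (E : {ffun (V1 + V2)%type -> S} -> P) (k : nat) : 0 < k -> valid (gunion G H) E ->
  exists (P1 P2 : finType) (E1 : {ffun ('I_k * V1)%type -> S} -> P1)
         (E2 : {ffun ('I_k * V2)%type -> S} -> P2),
   valid (@gcopies _ k G) E1 /\ valid (@gcopies _ k H) E2 /\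
   #|P1| * #|P2| <= #|P| ^ k * (16 * (#|{ffun V1 -> S}| * #|{ffun V2 -> S}|) * k ^ 2).
Proof.
move=> k0 HE.
have [E1 h1] := @cover_code _ S G k k0.
have [E2 h2] := @cover_code _ S H k k0.
exists _, _, E1, E2; split => //; split => //.
rewrite !card_option !card_ord; apply: num_core => //.
- by rewrite (alpha_gt0 G [ffun _ => 0%R]) alpha_le.
- by rewrite (alpha_gt0 H [ffun _ => 0%R]) alpha_le.
- exact: lower_bound HE.
Qed.

End Part6.

Section Part7.

Lemma min_ex (A : nat -> Prop) n : A n -> exists m, A m /\ forall m', A m' -> m <= m'.
Proof.
elim/ltn_ind: n => n IH An.
case: (classic (exists m', A m' /\ m' < n)) => [[m' [Am' lt]]|Hno].
  exact: IH lt Am'.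
exists n; split => // m' Am'; rewrite leqNgt; apply/negP => lt; apply: Hno; by exists m'.
Qed.

Lemma valid_id (V S : finType) (G : rel V) : valid G (fun x : {ffun V -> S} => x).
Proof. by move=> x y c; apply/eqP=> e; move: c; rewrite e confbxx. Qed.

Local Open Scope ring_scope.

Lemma bt_spec (R : realType) (V : finType) (G : rel V) (t : nat) :
  exists n : nat, beta_t R G t = n%:R /\
   (exists (P : finType) (E : {ffun V -> 'I_(2 ^ t)} -> P), valid G E /\ n = up_log 2 #|P|) /\
   (forall (P : finType) (E : {ffun V -> 'I_(2 ^ t)} -> P), valid G E -> (n <= up_log 2 #|P|)%N).
Proof.
pose A n := exists (P : finType) (E : {ffun V -> 'I_(2 ^ t)} -> P), valid G E /\ n = up_log 2 #|P|.
have [m [Am Hm]] : exists m, A m /\ forall m', A m' -> (m <= m')%N.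
  apply: (@min_ex A (up_log 2 #|{ffun V -> 'I_(2 ^ t)}|)).
  by exists _, (fun x => x); split => //; apply: valid_id.
exists m; split; last first.
  by split => // P E HE; apply: Hm; exists P, E.
rewrite /beta_t; apply/le_anti/andP; split.
  apply: ge_inf.
    exists m%:R => x [P [E [HE ->]]]; rewrite ler_nat; apply: Hm; exists P, E.
    by split => //; apply: sol_valid.
  by case: Am => P [E [HE ->]]; exists P, E; split => //; apply: valid_sol.
apply: lb_le_inf.
  by case: Am => P [E [HE _]]; exists (up_log 2 #|P|)%:R, P, E; split => //; apply: valid_sol.
move=> x [P [E [HE ->]]]; rewrite ler_nat; apply: Hm; exists P, E.
by split => //; apply: sol_valid.
Qed.

Lemma bt_le (R : realType) (V : finType) (G : rel V) (t : nat) (P : finType)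
  (E : {ffun V -> 'I_(2 ^ t)} -> P) : valid G E -> beta_t R G t <= (up_log 2 #|P|)%:R.
Proof. by move=> HE; have [n [-> [_ Hn]]] := bt_spec R G t; rewrite ler_nat; apply: Hn HE. Qed.

Lemma bt_ge0 (R : realType) (V : finType) (G : rel V) (t : nat) : 0 <= beta_t R G t.
Proof. by have [n [-> _]] := bt_spec R G t. Qed.

Definition binf (R : realType) (f : nat -> R) : R :=
  inf [set x : R | exists t : nat, (0 < t)%N /\ x = f t / t%:R].

Lemma binf_le (R : realType) (f : nat -> R) t : (forall t, 0 <= f t) -> (0 < t)%N ->
  binf f <= f t / t%:R.
Proof.
move=> f0 t0; apply: ge_inf; last by exists t.
exists 0 => x [s [s0 ->]]; apply: divr_ge0 => //.
Qed.

Lemma binf_ge (R : realType) (f : nat -> R) x :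
  (forall t, (0 < t)%N -> x <= f t / t%:R) -> x <= binf f.
Proof.
move=> H; apply: lb_le_inf; first by exists (f 1%N / 1%:R), 1%N.
by move=> y [t [t0 ->]]; apply: H.
Qed.

Lemma binf_add (R : realType) (f g : nat -> R) c :
  (forall t, 0 <= f t) -> (forall t, 0 <= g t) ->
  (forall t s, (0 < t)%N -> (0 < s)%N -> c <= f t / t%:R + g s / s%:R) ->
  c <= binf f + binf g.
Proof.
move=> f0 g0 H.
have H1 : forall s, (0 < s)%N -> c - g s / s%:R <= binf f.
  move=> s s0; apply: binf_ge => t t0; rewrite lerBlDr; exact: H.
rewrite -lerBlDl; apply: binf_ge => s s0; rewrite lerBlDl -lerBlDr; exact: H1.
Qed.

Lemma up_logM a b : (up_log 2 (a * b) <= up_log 2 a + up_log 2 b)%N.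
Proof.
apply: up_log_min => //; rewrite expnD; apply: leq_mul; exact: up_logP.
Qed.

Lemma up_logX a k : (up_log 2 (a ^ k) <= k * up_log 2 a)%N.
Proof.
apply: up_log_min => //; rewrite mulnC expnM.
case: k => [|k]; first by rewrite !expn0.
by rewrite leq_exp2r // up_logP.
Qed.

Lemma up_log_sum a b : (0 < a)%N -> (0 < b)%N ->
  (up_log 2 a + up_log 2 b <= (up_log 2 (a * b)).+1)%N.
Proof.
move=> a0 b0.
case: (leqP a 1) => a1.
  have -> : up_log 2 a = 0%N by apply/eqP; rewrite up_log_eq0 a1 orbT.
  by rewrite add0n; apply: leqW; apply: leq_up_log; rewrite leq_pmull.
case: (leqP b 1) => b1.
  have -> : up_log 2 b = 0%N by apply/eqP; rewrite up_log_eq0 b1 orbT.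
  by rewrite addn0; apply: leqW; apply: leq_up_log; rewrite leq_pmulr.
have ha := up_log_gtn (isT : (1 < 2)%N) a1.
have hb := up_log_gtn (isT : (1 < 2)%N) b1.
have hab : (a * b <= 2 ^ up_log 2 (a * b))%N by apply: up_logP.
have ua : (0 < up_log 2 a)%N by rewrite up_log_gt0 a1.
have ub : (0 < up_log 2 b)%N by rewrite up_log_gt0 b1.
have : (2 ^ ((up_log 2 a).-1 + (up_log 2 b).-1) < 2 ^ up_log 2 (a * b))%N.
  rewrite expnD; apply: leq_trans hab; rewrite -addn1.
  apply: (@leq_trans ((2 ^ (up_log 2 a).-1).+1 * (2 ^ (up_log 2 b).-1).+1)).
    by rewrite mulSnr mulnSr; lia.
  exact: leq_mul.
rewrite ltn_exp2l //; lia.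
Qed.

Lemma sq_le4 j : (j.+1 ^ 2 <= 4 ^ j)%N.
Proof.
have -> : (4 ^ j = (2 ^ j) ^ 2)%N by rewrite -expnM mulnC expnM.
by rewrite leq_exp2r // ltn_expl.
Qed.

Lemma archi_contra (R : realType) (Y K : R) : 0 < Y ->
  (forall j : nat, Y * (j.+1)%:R <= K) -> False.
Proof.
move=> Y0 H.
have x0 : 0 <= `|K| / Y by rewrite divr_ge0 // ltW.
have := archi_boundP x0; set n := Num.Def.archi_bound _ => hn.
have := H n; rewrite ltr_pdivrMr // in hn.
move=> h.
have : Y * n%:R < Y * n.+1%:R by rewrite ltr_pM2l // ltr_nat.
have := ler_norm K; rewrite mulrC in hn; lra.
Qed.

Lemma final_real (R : realType) (X B T : R) (K : nat) : 0 < T ->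
  (forall j : nat, X * T * (4 ^ j)%:R <= B * (4 ^ j)%:R + (K * j.+1)%:R) -> X <= B / T.
Proof.
move=> T0 H; rewrite ler_pdivlMr //.
rewrite leNgt; apply/negP => hlt.
set Y := X * T - B.
have Y0 : 0 < Y by rewrite /Y subr_gt0.
apply: (@archi_contra R Y K%:R) => // j.
have h1 : Y * (4 ^ j)%:R <= (K * j.+1)%:R.
  by move: (H j); rewrite /Y mulrBl lerBlDr addrC.
have h2 : Y * (j.+1 ^ 2)%:R <= Y * (4 ^ j)%:R by rewrite ler_pM2l // ler_nat sq_le4.
have : Y * (j.+1)%:R * (j.+1)%:R <= K%:R * (j.+1)%:R.
  have e1 : Y * (j.+1)%:R * (j.+1)%:R = Y * (j.+1 ^ 2)%:R by rewrite natrX expr2 mulrA.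
  have e2 : (K * j.+1)%:R = K%:R * (j.+1)%:R :> R by rewrite natrM.
  by rewrite e1 -e2; apply: le_trans h2 h1.
by rewrite ler_pM2r // ltr0Sn.
Qed.

End Part7.

Section Part8.
Local Open Scope ring_scope.

Lemma final_bound (R : realType) (X : R) (t N C : nat) : (0 < t)%N ->
  (forall k, (0 < k)%N -> exists p1 p2 : nat, [/\ (0 < p1)%N, (0 < p2)%N,
      (p1 * p2 <= N ^ k * (C * k ^ 2))%N &
      X * (t * k)%:R <= (up_log 2 p1 + up_log 2 p2)%:R]) ->
  X <= (up_log 2 N)%:R / t%:R.
Proof.
move=> t0 H.
apply: (@final_real R X _ _ (up_log 2 C + 5)); first by rewrite ltr0n.
move=> j.
have k0 : (0 < 4 ^ j)%N by rewrite expn_gt0.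
have [p1 [p2 [p10 p20 hp hX]]] := H _ k0.
set k := (4 ^ j)%N in k0 hp hX *.
set b := up_log 2 N.
have hn : (up_log 2 p1 + up_log 2 p2 <= k * b + (up_log 2 C + 5) * j.+1)%N.
  apply: leq_trans (up_log_sum p10 p20) _.
  have h1 : (up_log 2 (p1 * p2) <= up_log 2 (N ^ k) + up_log 2 (C * k ^ 2))%N.
    apply: leq_trans (leq_up_log 2 hp) _; exact: up_logM.
  have h2 := up_logX N k.
  have h3 : (up_log 2 (C * k ^ 2) <= up_log 2 C + 4 * j)%N.
    apply: up_log_min => //; rewrite expnD; apply: leq_mul; first exact: up_logP.
    by rewrite /k -[4%N]/(2 ^ 2)%N -!expnM leq_exp2l //; lia.
  lia.
have : X * t%:R * k%:R <= (k * b + (up_log 2 C + 5) * j.+1)%:R.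
  by rewrite -mulrA -natrM; apply: le_trans hX _; rewrite ler_nat.
by rewrite natrD natrM mulrC [_ * b%:R]mulrC.
Qed.

End Part8.

Section Part9.

Lemma card_pos (M P : finType) (E : M -> P) (x : M) : 0 < #|P|.
Proof. by apply/card_gt0P; exists (E x). Qed.

Lemma scale_code (V P : finType) (G : rel V) t s (E : {ffun V -> 'I_(2 ^ t)} -> P) :
  valid G E -> exists E' : {ffun V -> 'I_(2 ^ (t * s))} -> {ffun 'I_s -> P}, valid G E'.
Proof.
move=> HE; have h := @valid_copies s _ _ _ _ _ HE.
have [E1 h1] := valid_unflat h.
apply: valid_alpha h1.
by rewrite card_ord card_ffun !card_ord expnM.
Qed.

Lemma alpha_eq (V S P : finType) (G : rel V) (E : {ffun V -> S} -> P) (S' : finType) :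
  #|S'| = #|S| -> valid G E -> exists E' : {ffun V -> S'} -> P, valid G E'.
Proof. exact: valid_alpha. Qed.

Lemma graph_copies (V S P : finType) (G : rel V) a b n
  (E : {ffun ('I_a * ('I_b * V))%type -> S} -> P) :
  a * b = n -> valid (@gcopies _ a (@gcopies _ b G)) E ->
  exists E' : {ffun ('I_n * V)%type -> S} -> P, valid (@gcopies _ n G) E'.
Proof.
move=> e HE.
have ec : #|{: 'I_a * 'I_b}| = #|'I_n| by rewrite card_prod !card_ord.
have [h [hi hs]] := card_bij ec.
apply: (@valid_graph _ _ _ _ _ _ (fun x => (h (x.1, x.2.1), x.2.2)) E) HE.
  move=> [c v]; have [[x y] hxy] := hs c; exists (x, (y, v)); by rewrite /= hxy.
move=> [x [y v]] [x' [y' w]]; rewrite /gcopies /= => /andP[/eqP -> /andP[/eqP -> ->]].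
by rewrite eqxx.
Qed.

Lemma graph_merge (V1 V2 S P : finType) (G : rel V1) (H : rel V2) n
  (E : {ffun (('I_n * V1) + ('I_n * V2))%type -> S} -> P) :
  valid (gunion (@gcopies _ n G) (@gcopies _ n H)) E ->
  exists E' : {ffun ('I_n * (V1 + V2))%type -> S} -> P, valid (@gcopies _ n (gunion G H)) E'.
Proof.
move=> HE.
apply: (@valid_graph _ _ _ _ _ _
   (fun x => match x with inl (c, v) => (c, inl v) | inr (c, v) => (c, inr v) end) E) HE.
  by move=> [c [v|v]]; [exists (inl (c, v)) | exists (inr (c, v))].
by move=> [[c v]|[c v]] [[c' w]|[c' w]].
Qed.

Lemma graph_split (V1 V2 S P : finType) (G : rel V1) (H : rel V2) n
  (E : {ffun ('I_n * (V1 + V2))%type -> S} -> P) :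
  valid (@gcopies _ n (gunion G H)) E ->
  exists E' : {ffun (('I_n * V1) + ('I_n * V2))%type -> S} -> P,
    valid (gunion (@gcopies _ n G) (@gcopies _ n H)) E'.
Proof.
move=> HE.
apply: (@valid_graph _ _ _ _ _ _
   (fun x : 'I_n * (V1 + V2) => match x.2 with inl v => inl (x.1, v) | inr v => inr (x.1, v) end) E) HE.
  by move=> [[c v]|[c v]]; [exists (c, inl v) | exists (c, inr v)].
by move=> [c [v|v]] [c' [w|w]]; rewrite /gcopies /= ?andbF.
Qed.

End Part9.

Section Part10.
Local Open Scope ring_scope.

Lemma real_split (R : realType) (nG nH t s : nat) : (0 < t)%N -> (0 < s)%N ->
  (s * nG + t * nH)%:R / (t * s)%:R = nG%:R / t%:R + nH%:R / s%:R :> R.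
Proof.
move=> t0 s0; have t0' : t%:R != 0 :> R by rewrite pnatr_eq0 -lt0n.
have s0' : s%:R != 0 :> R by rewrite pnatr_eq0 -lt0n.
rewrite natrD !natrM; field; by rewrite t0' s0'.
Qed.

Lemma beta_upper (R : realType) (V1 V2 : finType) (G : rel V1) (H : rel V2) :
  beta R (gunion G H) <= beta R G + beta R H.
Proof.
change (binf (fun t => beta_t R (gunion G H) t) <=
        binf (fun t => beta_t R G t) + binf (fun t => beta_t R H t)).
apply: binf_add; try by move=> ?; apply: bt_ge0.
move=> t s t0 s0.
have [nG [-> [[PG [EG [hG ->]]] _]]] := bt_spec R G t.
have [nH [-> [[PH [EH [hH ->]]] _]]] := bt_spec R H s.
have [EG' hG'] := scale_code s hG.
have [EH1 hH1] := scale_code t hH.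
have [EH' hH'] : exists E' : {ffun V2 -> 'I_(2 ^ (t * s))} -> {ffun 'I_t -> PH}, valid H E'.
  by apply: (alpha_eq _ hH1); rewrite !card_ord mulnC.
have hp := valid_pair hG' hH'.
have ts0 : (0 < t * s)%N by rewrite muln_gt0 t0.
apply: le_trans (binf_le (fun t => bt_ge0 R (gunion G H) t) ts0) _.
apply: le_trans (_ : (s * up_log 2 #|PG| + t * up_log 2 #|PH|)%:R / (t * s)%:R <= _); last first.
  by rewrite real_split.
rewrite ler_pM2r ?invr_gt0 ?ltr0n //.
apply: le_trans (bt_le R hp) _; rewrite ler_nat card_prod !card_ffun !card_ord.
apply: leq_trans (up_logM _ _) _; apply: leq_add; exact: up_logX.
Qed.

Lemma beta_lower (R : realType) (V1 V2 : finType) (G : rel V1) (H : rel V2) :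
  beta R G + beta R H <= beta R (gunion G H).
Proof.
change (binf (fun t => beta_t R G t) + binf (fun t => beta_t R H t) <=
        binf (fun t => beta_t R (gunion G H) t)).
apply: binf_ge => t t0.
have [b [-> [[P [E [HE ->]]] _]]] := bt_spec R (gunion G H) t.
pose S' := 'I_((2 ^ t).-1.+1).
have cS : #|S'| = (2 ^ t)%N by rewrite card_ord prednK // expn_gt0.
have [E' HE'] : exists E' : {ffun (V1 + V2)%type -> S'} -> P, valid (gunion G H) E'.
  by apply: (alpha_eq _ HE); rewrite cS card_ord.
apply: (@final_bound R _ t #|P| (16 * (#|{ffun V1 -> S'}| * #|{ffun V2 -> S'}|))) => // k k0.
have [P1 [P2 [E1 [E2 [h1 [h2 hc]]]]]] := core k0 HE'.
have [E1a h1a] := valid_unflat h1.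
have [E2a h2a] := valid_unflat h2.
have ck : #|'I_(2 ^ (t * k))| = #|{ffun 'I_k -> S'}| by rewrite card_ffun cS !card_ord expnM.
have [E1b h1b] := alpha_eq ck h1a.
have [E2b h2b] := alpha_eq ck h2a.
have x0 : {ffun V1 -> 'I_(2 ^ (t * k))} by exact: [ffun _ => Ordinal (expn_gt0 2 (t * k))].
have y0 : {ffun V2 -> 'I_(2 ^ (t * k))} by exact: [ffun _ => Ordinal (expn_gt0 2 (t * k))].
exists #|P1|, #|P2|; split => //; first exact: card_pos E1b x0.
  exact: card_pos E2b y0.
have tk0 : (0 < t * k)%N by rewrite muln_gt0 t0.
have hb1 := binf_le (fun t => bt_ge0 R G t) tk0.
have hb2 := binf_le (fun t => bt_ge0 R H t) tk0.
have l1 := bt_le R h1b. have l2 := bt_le R h2b.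
rewrite natrD mulrDl.
have tkp : 0 < (t * k)%:R :> R by rewrite ltr0n.
apply: lerD.
  by rewrite -ler_pdivlMr //; apply: le_trans hb1 _; rewrite ler_pM2r ?invr_gt0.
by rewrite -ler_pdivlMr //; apply: le_trans hb2 _; rewrite ler_pM2r ?invr_gt0.
Qed.

End Part10.

Section Part11.
Local Open Scope ring_scope.

Lemma betas_upper (R : realType) (V1 V2 : finType) (G : rel V1) (H : rel V2) :
  beta_star R (gunion G H) <= beta_star R G + beta_star R H.
Proof.
change (binf (fun t => beta_t R (@gcopies _ t (gunion G H)) 1) <=
        binf (fun t => beta_t R (@gcopies _ t G) 1) + binf (fun t => beta_t R (@gcopies _ t H) 1)).
apply: binf_add; try by move=> ?; apply: bt_ge0.
move=> t s t0 s0.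
have [nG [-> [[PG [EG [hG ->]]] _]]] := bt_spec R (@gcopies _ t G) 1.
have [nH [-> [[PH [EH [hH ->]]] _]]] := bt_spec R (@gcopies _ s H) 1.
have [EG' hG'] := graph_copies (erefl (s * t)%N) (@valid_copies s _ _ _ _ _ hG).
have [EH' hH'] := graph_copies (mulnC t s) (@valid_copies t _ _ _ _ _ hH).
have [Ep hp] := graph_merge (valid_pair hG' hH').
have ts0 : (0 < s * t)%N by rewrite muln_gt0 t0 s0.
apply: le_trans (binf_le (fun t => bt_ge0 R (@gcopies _ t (gunion G H)) 1) ts0) _.
apply: le_trans (_ : (s * up_log 2 #|PG| + t * up_log 2 #|PH|)%:R / (t * s)%:R <= _); last first.
  by rewrite real_split.
rewrite [(t * s)%N]mulnC ler_pM2r ?invr_gt0 ?ltr0n ?muln_gt0 ?t0 ?s0 //.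
apply: le_trans (bt_le R hp) _; rewrite ler_nat card_prod !card_ffun !card_ord.
apply: leq_trans (up_logM _ _) _; apply: leq_add; exact: up_logX.
Qed.

Lemma betas_lower (R : realType) (V1 V2 : finType) (G : rel V1) (H : rel V2) :
  beta_star R G + beta_star R H <= beta_star R (gunion G H).
Proof.
change (binf (fun t => beta_t R (@gcopies _ t G) 1) + binf (fun t => beta_t R (@gcopies _ t H) 1)
        <= binf (fun t => beta_t R (@gcopies _ t (gunion G H)) 1)).
apply: binf_ge => t t0.
have [b [-> [[P [E [HE ->]]] _]]] := bt_spec R (@gcopies _ t (gunion G H)) 1.
pose S' := 'I_(1.+1).
have [E0 HE0] := graph_split HE.
have [E' HE'] : exists E' : {ffun (('I_t * V1) + ('I_t * V2))%type -> S'} -> P,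
    valid (gunion (@gcopies _ t G) (@gcopies _ t H)) E'.
  by apply: (alpha_eq _ HE0); rewrite !card_ord.
apply: (@final_bound R _ t #|P|
  (16 * (#|{ffun ('I_t * V1)%type -> S'}| * #|{ffun ('I_t * V2)%type -> S'}|))) => // k k0.
have [P1 [P2 [E1 [E2 [h1 [h2 hc]]]]]] := core k0 HE'.
have c2 : #|'I_(2 ^ 1)| = #|S'| by rewrite !card_ord.
have [E1a h1a] := alpha_eq c2 h1.
have [E2a h2a] := alpha_eq c2 h2.
have [E1b h1b] := graph_copies (mulnC k t) h1a.
have [E2b h2b] := graph_copies (mulnC k t) h2a.
have x0 : {ffun ('I_(t * k) * V1)%type -> 'I_(2 ^ 1)} by exact: [ffun _ => ord0].
have y0 : {ffun ('I_(t * k) * V2)%type -> 'I_(2 ^ 1)} by exact: [ffun _ => ord0].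
exists #|P1|, #|P2|; split => //; first exact: card_pos E1b x0.
  exact: card_pos E2b y0.
have tk0 : (0 < t * k)%N by rewrite muln_gt0 t0.
have hb1 := binf_le (fun t => bt_ge0 R (@gcopies _ t G) 1) tk0.
have hb2 := binf_le (fun t => bt_ge0 R (@gcopies _ t H) 1) tk0.
have l1 := bt_le R h1b. have l2 := bt_le R h2b.
rewrite natrD mulrDl.
have tkp : 0 < (t * k)%:R :> R by rewrite ltr0n.
apply: lerD.
  by rewrite -ler_pdivlMr //; apply: le_trans hb1 _; rewrite ler_pM2r ?invr_gt0.
by rewrite -ler_pdivlMr //; apply: le_trans hb2 _; rewrite ler_pM2r ?invr_gt0.
Qed.


End Part11.

Local Open Scope ring_scope.

Theorem lemma2p16 (R : realType) (V1 V2 : finType) (G : rel V1) (H : rel V2) :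
  undirected G -> undirected H ->
  beta R (gunion G H) = beta R G + beta R H /\
  beta_star R (gunion G H) = beta_star R G + beta_star R H.
Proof.
move=> _ _; split; apply/le_anti/andP; split.
- exact: beta_upper.
- exact: beta_lower.
- exact: betas_upper.
- exact: betas_lower.
Qed.
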